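(* Assume each $f_i$ is convex with $L$-Lipschitz gradient (no strong convexity assumed), and let $x^*$ be a minimiser of $F=f+h$. Run SAGA with step size $\gamma=\frac{1}{3L}$ starting from $x^0$ with $\phi_i^0=x^0$ for all $i$, and let $\bar{x}^{k}=\frac{1}{k}\sum_{t=1}^{k}x^{t}$ for $k\ge1$. Then \[ \mathbb{E}\left[F(\bar{x}^{k})\right]-F(x^{*})\leq\frac{4n}{k}\left[\frac{2L}{n}\Vert x^{0}-x^{*}\Vert^{2}+f(x^{0})-\langle f'(x^{*}),x^{0}-x^{*}\rangle -f(x^{*})\right], \] where the expectation is over all random index choices up to step $k$.
   Context: Setting: $f(x)=\frac1n\sum_{i=1}^n f_i(x)$ with each $f_i\colon\mathbb{R}^d\to\mathbb{R}$ convex and differentiable with $L$-Lipschitz gradient $f_i'$; $h\colon\mathbb{R}^d\to\mathbb{R}\cup\{+\infty\}$ is proper, closed, convex; $F=f+h$. The proximal operator is $\mathrm{prox}^h_\gamma(y)=\operatorname{argmin}_{x}\{h(x)+\frac{1}{2\gamma}\Vert x-y\Vert^2\}$. SAGA algorithm with step size $\gamma>0$: start from $x^0\in\mathbb{R}^d$ and $\phi_i^0=x^0$ for all $i$. At iteration $k+1$, given $x^k$ and $\phi_1^k,\dots,\phi_n^k$: pick $j$ uniformly at random from $\{1,\dots,n\}$ (independently of the past); set $\phi_j^{k+1}=x^k$ and $\phi_i^{k+1}=\phi_i^k$ for $i\neq j$; set $w^{k+1}=x^k-\gamma\big[f_j'(\phi_j^{k+1})-f_j'(\phi_j^k)+\frac1n\sum_{i=1}^n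 f_i'(\phi_i^k)\big]$ and $x^{k+1}=\mathrm{prox}^h_\gamma(w^{k+1})$. *)

(* Defs.v *)
From HB Require Import structures.
From mathcomp Require Import all_boot.
From Stdlib Require Import Reals.

Set Implicit Arguments.
Unset Strict Implicit.
Unset Printing Implicit Defensive.

Lemma Rplus_assoc_ssr : associative Rplus.
Proof. by move=> x y z; rewrite Rplus_assoc. Qed.
HB.instance Definition _ :=
  Monoid.isComLaw.Build R 0%R Rplus Rplus_assoc_ssr Rplus_comm Rplus_0_l.

Local Open Scope R_scope.

Definition vec (d : nat) := 'I_d -> R.

Definition vadd {d} (x y : vec d) : vec d := fun i => x i + y i.
Definition vsub {d} (x y : vec d) : vec d := fun i => x i - y i.
Definition vscale {d} (a : R) (x : vec d) : vec d := fun i => a * x i.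
Definition inner {d} (x y : vec d) : R := \big[Rplus/0]_(i < d) (x i * y i).
Definition norm2 {d} (x : vec d) : R := inner x x.
Definition norm {d} (x : vec d) : R := sqrt (norm2 x).

Definition avgR (n : nat) (F : 'I_n -> R) : R :=
  / INR n * \big[Rplus/0]_(i < n) F i.
Definition avgV {d} (n : nat) (G : 'I_n -> vec d) : vec d :=
  fun c => / INR n * \big[Rplus/0]_(i < n) G i c.

Definition convex_fun {d} (f : vec d -> R) : Prop :=
  forall (x y : vec d) (t : R), 0 <= t <= 1 ->
    f (vadd (vscale t x) (vscale (1 - t) y)) <= t * f x + (1 - t) * f y.

Definition has_gradient {d} (f : vec d -> R) (g : vec d -> vec d) : Prop :=
  forall (x : vec d) (eps : R), 0 < eps -> exists delta : R, 0 < delta /\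
    forall y : vec d, norm (vsub y x) < delta ->
      Rabs (f y - f x - inner (g x) (vsub y x)) <= eps * norm (vsub y x).

Definition lipschitz {d} (L : R) (g : vec d -> vec d) : Prop :=
  forall x y : vec d, norm (vsub (g x) (g y)) <= L * norm (vsub x y).

(* Extended-real valued h : R^d -> R U {+oo} is represented by its effective
   domain [dom] and its (real) values [h] on [dom]; h = +oo outside [dom]. *)
Definition proper_ext {d} (dom : vec d -> Prop) : Prop := exists x, dom x.

Definition convex_ext {d} (dom : vec d -> Prop) (h : vec d -> R) : Prop :=
  forall (x y : vec d) (t : R), dom x -> dom y -> 0 <= t <= 1 ->
    dom (vadd (vscale t x) (vscale (1 - t) y)) /\
    h (vadd (vscale t x) (vscale (1 - t) y)) <= t * h x + (1 - t) * h y.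

Definition vconv {d} (u : nat -> vec d) (x : vec d) : Prop :=
  forall eps, 0 < eps -> exists N, forall m, (N <= m)%nat -> norm (vsub (u m) x) < eps.

(* closed (= lower semicontinuous): every sublevel set {h <= a} is closed *)
Definition closed_ext {d} (dom : vec d -> Prop) (h : vec d -> R) : Prop :=
  forall (a : R) (u : nat -> vec d) (x : vec d),
    (forall m, dom (u m) /\ h (u m) <= a) -> vconv u x -> dom x /\ h x <= a.

Definition is_prox {d} (dom : vec d -> Prop) (h : vec d -> R)
    (p : R -> vec d -> vec d) : Prop :=
  forall (gam : R) (y : vec d), 0 < gam ->
    dom (p gam y) /\
    forall z, dom z ->
      h (p gam y) + norm2 (vsub (p gam y) y) / (2 * gam)
        <= h z + norm2 (vsub z y) / (2 * gam).

Record saga_state (n d : nat) := SagaState { sx : vec d; sphi : 'I_n -> vec d }.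

Definition saga_init {n d} (x0 : vec d) : saga_state n d :=
  SagaState x0 (fun _ => x0).

Definition saga_step {n d} (g : 'I_n -> vec d -> vec d) (p : R -> vec d -> vec d)
    (gam : R) (s : saga_state n d) (j : 'I_n) : saga_state n d :=
  let x := sx s in
  let phi := sphi s in
  let phi' := fun i => if i == j then x else phi i in
  let w := vsub x (vscale gam
             (vadd (vsub (g j (phi' j)) (g j (phi j)))
                   (avgV (fun i => g i (phi i))))) in
  SagaState (p gam w) phi'.

Definition saga_run {n d} g p gam (x0 : vec d) (js : seq 'I_n) : saga_state n d :=
  foldl (saga_step g p gam) (saga_init x0) js.

(* x^t for t = 1..k along the choices js = (j_1,...,j_k) *)
Definition saga_iter {n d} g p gam (x0 : vec d) (js : seq 'I_n) (t : nat) : vec d :=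
  sx (saga_run g p gam x0 (take t js)).

Definition saga_avg {n d} g p gam (x0 : vec d) (k : nat) (js : seq 'I_n) : vec d :=
  fun c => / INR k * \big[Rplus/0]_(1 <= t < k.+1) saga_iter g p gam x0 js t c.

(* Expectation over k i.i.d. uniform indices in {1..n} (here 'I_n) *)
Definition expect_idx (n k : nat) (X : seq 'I_n -> R) : R :=
  / (INR n ^ k) * \big[Rplus/0]_(js : k.-tuple 'I_n) X (tval js).

(* Main.v *)
Require Import Defs.
From HB Require Import structures.
From mathcomp Require Import all_boot.
From Stdlib Require Import Reals.
From Stdlib Require Import Lra Lia FunctionalExtensionality.
Local Open Scope R_scope.
Set Warnings "-notation-overridden".
Set Implicit Arguments. Unset Strict Implicit.

Lemma sumR_scal (I : Type) (r : seq I) (P : pred I) (c : R) (F : I -> R) :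
  \big[Rplus/0]_(i <- r | P i) (c * F i) = c * \big[Rplus/0]_(i <- r | P i) F i.
Proof.
apply: (big_rec2 (fun a b => a = c * b)); first by ring.
by move=> i a b _ ->; ring.
Qed.

Lemma sumR_opp (I : Type) (r : seq I) (P : pred I) (F : I -> R) :
  \big[Rplus/0]_(i <- r | P i) (- F i) = - \big[Rplus/0]_(i <- r | P i) F i.
Proof.
apply: (big_rec2 (fun a b => a = - b)); first by ring.
by move=> i a b _ ->; ring.
Qed.

Lemma sumR_add (I : Type) (r : seq I) (P : pred I) (F G : I -> R) :
  \big[Rplus/0]_(i <- r | P i) (F i + G i) =
  \big[Rplus/0]_(i <- r | P i) F i + \big[Rplus/0]_(i <- r | P i) G i.
Proof. by rewrite big_split. Qed.

Lemma sumR_sub (I : Type) (r : seq I) (P : pred I) (F G : I -> R) :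
  \big[Rplus/0]_(i <- r | P i) (F i - G i) =
  \big[Rplus/0]_(i <- r | P i) F i - \big[Rplus/0]_(i <- r | P i) G i.
Proof. by rewrite /Rminus big_split sumR_opp. Qed.

Lemma sumR_le (I : Type) (r : seq I) (P : pred I) (F G : I -> R) :
  (forall i, P i -> F i <= G i) ->
  \big[Rplus/0]_(i <- r | P i) F i <= \big[Rplus/0]_(i <- r | P i) G i.
Proof.
move=> H; apply: (big_ind2 (fun a b => a <= b)); [lra| |by []].
by move=> a b c e ? ?; lra.
Qed.

Lemma sumR_ge0 (I : Type) (r : seq I) (P : pred I) (F : I -> R) :
  (forall i, P i -> 0 <= F i) -> 0 <= \big[Rplus/0]_(i <- r | P i) F i.
Proof.
move=> H; apply: (big_ind (fun a => 0 <= a)); [lra| |by []].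
by move=> a b ? ?; lra.
Qed.

Lemma sumR_const_ord (m : nat) (c : R) : \big[Rplus/0]_(i < m) c = INR m * c.
Proof.
elim: m => [|m IH]; first by rewrite big_ord0 /=; ring.
by rewrite big_ord_recr IH S_INR /=; rewrite Rmult_plus_distr_r Rmult_1_l.
Qed.

Lemma vext d (a b : vec d) : (forall c, a c = b c) -> a = b.
Proof. by move=> H; apply: functional_extensionality. Qed.

Section V.
Variable d : nat.
Implicit Types a b c : vec d.

Lemma inner_addl a b c : inner (vadd a b) c = inner a c + inner b c.
Proof. by rewrite /inner -sumR_add; apply: eq_bigr => i _; rewrite /vadd; ring. Qed.
Lemma inner_addr a b c : inner c (vadd a b) = inner c a + inner c b.
Proof. by rewrite /inner -sumR_add; apply: eq_bigr => i _; rewrite /vadd; ring. Qed.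
Lemma inner_subl a b c : inner (vsub a b) c = inner a c - inner b c.
Proof. by rewrite /inner -sumR_sub; apply: eq_bigr => i _; rewrite /vsub; ring. Qed.
Lemma inner_subr a b c : inner c (vsub a b) = inner c a - inner c b.
Proof. by rewrite /inner -sumR_sub; apply: eq_bigr => i _; rewrite /vsub; ring. Qed.
Lemma inner_scalel t a b : inner (vscale t a) b = t * inner a b.
Proof. by rewrite /inner -sumR_scal; apply: eq_bigr => i _; rewrite /vscale; ring. Qed.
Lemma inner_scaler t a b : inner a (vscale t b) = t * inner a b.
Proof. by rewrite /inner -sumR_scal; apply: eq_bigr => i _; rewrite /vscale; ring. Qed.
Lemma inner_sym a b : inner a b = inner b a.
Proof. by rewrite /inner; apply: eq_bigr => i _; ring. Qed.
Lemma norm2_ge0 a : 0 <= norm2 a.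
Proof. by apply: sumR_ge0 => i _; nra. Qed.
Lemma norm_sq a : norm a * norm a = norm2 a.
Proof. by rewrite /norm sqrt_sqrt //; apply: norm2_ge0. Qed.
Lemma norm_ge0 a : 0 <= norm a.
Proof. by apply: sqrt_pos. Qed.

End V.

Ltac vexpand := rewrite /norm2 ?(inner_addl, inner_addr, inner_subl, inner_subr, inner_scalel, inner_scaler).

Ltac genbig := repeat match goal with |- context [@bigop.body ?R ?I ?i ?r ?F] =>
   let s := fresh "S" in set s := @bigop.body R I i r F end.
Ltac rring := genbig; ring.
Ltac rfield := genbig; field.

Lemma sumR_nat_recr m n (F : nat -> R) : (m <= n)%nat ->
  \big[Rplus/0]_(m <= i < n.+1) F i = \big[Rplus/0]_(m <= i < n) F i + F n.
Proof. by move=> H; rewrite big_nat_recr. Qed.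
Lemma sumR_nat_recl m n (F : nat -> R) : (m <= n)%nat ->
  \big[Rplus/0]_(m <= i < n.+1) F i = F m + \big[Rplus/0]_(m <= i < n) F i.+1.
Proof. by move=> H; rewrite big_nat_recl. Qed.

Ltac symnorm := repeat match goal with |- context [inner ?a ?b] =>
  match goal with |- context [inner b a] =>
    assert_fails (constr_eq a b); rewrite (inner_sym b a) end end.
Ltac vexp := rewrite /norm2; repeat first [rewrite inner_subl | rewrite inner_subr | rewrite inner_scalel | rewrite inner_scaler]; symnorm.
Ltac genbig_all := repeat match goal with
  | |- context [@bigop.body ?R ?I ?i ?r ?F] =>
   let s := fresh "S" in set s := @bigop.body R I i r F in *
  | H : context [@bigop.body ?R ?I ?i ?r ?F] |- _ =>
   let s := fresh "S" in set s := @bigop.body R I i r F in * end.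


Section A.
Variable d : nat.
Implicit Types a b c x y v : vec d.

Lemma norm2_scale t a : norm2 (vscale t a) = t * t * norm2 a.
Proof. rewrite /norm2 inner_scalel inner_scaler; ring. Qed.

Lemma norm_scale t a : 0 <= t -> norm (vscale t a) = t * norm a.
Proof.
move=> Ht; rewrite /norm norm2_scale sqrt_mult; last exact: norm2_ge0.
- by rewrite sqrt_square.
- by nra.
Qed.

Lemma young s a b : 2 * s * inner a b <= s * s * norm2 a + norm2 b.
Proof.
have := norm2_ge0 (vsub (vscale s a) b).
vexpand; rewrite (inner_sym b a); nra.
Qed.

Lemma norm2_vsubC a b : norm2 (vsub a b) = norm2 (vsub b a).
Proof. vexpand; rewrite (inner_sym b a); ring. Qed.

Lemma lip2 L (g : vec d -> vec d) : lipschitz L g -> forall x y,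
  norm2 (vsub (g x) (g y)) <= L * L * norm2 (vsub x y).
Proof.
move=> H x y; have := H x y; rewrite -norm_sq -(norm_sq (vsub x y)).
have := norm_ge0 (vsub (g x) (g y)); have := norm_ge0 (vsub x y); nra.
Qed.

Lemma gradA (f : vec d -> R) g : convex_fun f -> has_gradient f g ->
  forall x y, f x + inner (g x) (vsub y x) <= f y.
Proof.
move=> Hc Hg x y.
set v := vsub y x.
set nv := norm v.
have Hnv : 0 <= nv by apply: norm_ge0.
suff H : forall eps, 0 < eps -> - (eps * nv) <= f y - f x - inner (g x) v.
  case: (Rle_lt_dec 0 (f y - f x - inner (g x) v)) => Ha; first lra.
  set a := f y - f x - inner (g x) v in Ha H.
  have He : 0 < - a / (2 * (nv + 1)).
    apply: Rdiv_lt_0_compat; lra.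
  have := H _ He.
  have E : - a / (2 * (nv + 1)) * (nv + 1) = - a / 2 by field; lra.
  have : - a / (2 * (nv + 1)) * nv <= - a / 2 by rewrite -E; nra.
  lra.
move=> eps He.
case: (Hg x eps He) => delta [Hd Hy].
set t := Rmin 1 (delta / (2 * (nv + 1))).
have Ht1 : t <= 1 by apply: Rmin_l.
have Ht2 : t <= delta / (2 * (nv + 1)) by apply: Rmin_r.
have Ht0 : 0 < t.
  apply: Rmin_pos; first lra. apply: Rdiv_lt_0_compat; lra.
have Htn : t * nv < delta.
  have E : delta / (2 * (nv + 1)) * (nv + 1) = delta / 2 by field; lra.
  have : t * (nv + 1) <= delta / 2 by rewrite -E; nra.
  nra.
set z := vadd (vscale t y) (vscale (1 - t) x).
have Hz : vsub z x = vscale t v.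
  apply: vext => c; rewrite /z /v /vsub /vadd /vscale; ring.
have Hn : norm (vsub z x) = t * nv by rewrite Hz norm_scale //; lra.
have Hy' := Hy z.
rewrite Hn Hz inner_scaler in Hy'.
have Hy'' := Hy' Htn.
have Hc' := Hc y x t (conj (Rlt_le _ _ Ht0) Ht1).
rewrite -/z in Hc'.
have Hab := Rle_abs (- (f z - f x - t * inner (g x) v)).
rewrite Rabs_Ropp in Hab.
nra.
Qed.

Lemma gradB (f : vec d -> R) g L : 0 < L -> convex_fun f -> has_gradient f g ->
  lipschitz L g ->
  forall x y, f y <= f x + inner (g x) (vsub y x) + L / 2 * norm2 (vsub y x).
Proof.
move=> HL Hc Hg Hl x y.
set v := vsub y x.
set ip := inner (g x) v.
set n2 := norm2 v.
have Hn2 : 0 <= n2 by apply: norm2_ge0.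
have key : forall N : nat, (0 < N)%nat ->
   f y - f x - ip <= L / 2 * n2 + L * n2 / (2 * INR N).
  move=> N HN.
  have HNr : 0 < INR N by apply: lt_0_INR; apply/ltP.
  pose z (m : nat) := vadd x (vscale (INR m / INR N) v).
  have claim : forall m, (m <= N)%nat ->
    f (z m) - f x <= INR m / INR N * ip +
       L * n2 * INR m * (INR m + 1) / (2 * (INR N * INR N)).
    elim => [|m IH] Hm.
      have -> : z 0%nat = x by apply: vext => c; rewrite /z /vadd /vscale /=; field; lra.
      rewrite /=. have -> : 0 / INR N = 0 by field; lra.
      have -> : L * n2 * 0 * (0 + 1) / (2 * (INR N * INR N)) = 0 by field; lra.
      lra.
    have IH' := IH (ltnW Hm).
    have HA := gradA Hc Hg (z m.+1) (z m).
    have Hsub : vsub (z m) (z m.+1) = vscale (- / INR N) v.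
      apply: vext => c; rewrite /z /vsub /vadd /vscale S_INR; field; lra.
    rewrite Hsub inner_scaler in HA.
    have Hsp : inner (g (z m.+1)) v = ip + inner v (vsub (g (z m.+1)) (g x)).
      by rewrite inner_subr (inner_sym v (g x)) (inner_sym v (g (z m.+1))) /ip; ring.
    set s := L * (INR m + 1) / INR N.
    have Hs : 0 < s.
      apply: Rdiv_lt_0_compat => //. apply: Rmult_lt_0_compat => //.
      have := pos_INR m; lra.
    have HY := young s v (vsub (g (z m.+1)) (g x)).
    rewrite -/n2 in HY.
    have HLp := lip2 Hl (z m.+1) x.
    have Hzx : vsub (z m.+1) x = vscale ((INR m + 1) / INR N) v.
      apply: vext => c; rewrite /z /vsub /vadd /vscale S_INR; field; lra.
    rewrite Hzx norm2_scale -/n2 in HLp.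
    have Hss : L * L * ((INR m + 1) / INR N * ((INR m + 1) / INR N) * n2) = s * s * n2.
      rewrite /s; field; lra.
    rewrite Hss -/n2 in HLp.
    have Hq : inner v (vsub (g (z m.+1)) (g x)) <= s * n2.
      have : 2 * s * inner v (vsub (g (z m.+1)) (g x)) <= 2 * s * (s * n2) by nra.
      nra.
    rewrite Hsp in HA.
    have E1 : INR m.+1 / INR N * ip = INR m / INR N * ip + / INR N * ip
      by rewrite S_INR; field; lra.
    have E2 : L * n2 * INR m.+1 * (INR m.+1 + 1) / (2 * (INR N * INR N)) =
       L * n2 * INR m * (INR m + 1) / (2 * (INR N * INR N)) + / INR N * (s * n2).
      rewrite /s S_INR; field; lra.
    rewrite E1 E2.
    have HiN : 0 < / INR N by apply: Rinv_0_lt_compat.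
    have : / INR N * inner v (vsub (g (z m.+1)) (g x)) <= / INR N * (s * n2).
      by apply: Rmult_le_compat_l; lra.
    nra.
  have := claim N (leqnn N).
  have -> : z N = y by apply: vext => c; rewrite /z /vadd /vscale /v /vsub; field; lra.
  have -> : INR N / INR N * ip = ip by field; lra.
  have -> : L * n2 * INR N * (INR N + 1) / (2 * (INR N * INR N)) =
     L / 2 * n2 + L * n2 / (2 * INR N) by field; lra.
  lra.
case: (Rle_lt_dec (f y - f x - ip) (L / 2 * n2)) => H; first lra.
exfalso.
set a := f y - f x - ip - L / 2 * n2.
have Ha : 0 < a by rewrite /a; lra.
case: (INR_unbounded (L * n2 / (2 * a))) => N HN.
have HN0 : (0 < N)%nat.
  case: N HN => [|N] //= HN.
  have : 0 <= L * n2 / (2 * a) by apply: Rle_mult_inv_pos; nra.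
  lra.
have HNr : 0 < INR N by apply: lt_0_INR; apply/ltP.
have := key N HN0.
have : L * n2 / (2 * INR N) < a.
  apply/(Rmult_lt_reg_r (2 * INR N)); first lra.
  have -> : L * n2 / (2 * INR N) * (2 * INR N) = L * n2 by field; lra.
  have E : L * n2 / (2 * a) * (2 * a) = L * n2 by field; lra.
  have : L * n2 / (2 * a) * (2 * a) < INR N * (2 * a).
    apply: Rmult_lt_compat_r; lra.
  lra.
rewrite /a; lra.
Qed.

End A.


Lemma gradC d (f : vec d -> R) g L : 0 < L -> convex_fun f -> has_gradient f g ->
  lipschitz L g ->
  forall x y, f x + inner (g x) (vsub y x) + / (2 * L) * norm2 (vsub (g y) (g x)) <= f y.
Proof.
move=> HL Hc Hg Hl x y.
set D := vsub (g y) (g x).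
set z := vsub y (vscale (/ L) D).
have HA := gradA Hc Hg x z.
have HB := gradB HL Hc Hg Hl y z.
have E1 : vsub z x = vsub (vsub y x) (vscale (/ L) D).
  by apply: vext => c; rewrite /z /vsub /vscale; ring.
have E2 : vsub z y = vscale (- / L) D.
  by apply: vext => c; rewrite /z /vsub /vscale; ring.
rewrite E1 inner_subr inner_scaler in HA.
rewrite E2 inner_scaler norm2_scale in HB.
have E3 : norm2 D = inner (g y) D - inner (g x) D by rewrite /norm2 {1}/D inner_subl.
have HL' : 0 < / L by apply: Rinv_0_lt_compat.
have E4 : / (2 * L) = / L / 2 by field; lra.
have E5 : L / 2 * (- / L * - / L * norm2 D) = / L / 2 * norm2 D by field; lra.
have E6 : / L * norm2 D = / L * inner (g y) D - / L * inner (g x) D by rewrite E3; ring.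
rewrite E4; lra.
Qed.


Section Avg.
Variable n : nat.
Hypothesis Hn : (0 < n)%nat.
Implicit Types F G : 'I_n -> R.

Lemma INRn_pos : 0 < INR n.
Proof. by apply: lt_0_INR; apply/ltP. Qed.

Lemma avgR_ext F G : (forall i, F i = G i) -> avgR F = avgR G.
Proof. by move=> H; rewrite /avgR; congr (_ * _); apply: eq_bigr => i _. Qed.

Lemma avgR_add F G : avgR (fun i => F i + G i) = avgR F + avgR G.
Proof. by rewrite /avgR sumR_add; rring. Qed.
Lemma avgR_sub F G : avgR (fun i => F i - G i) = avgR F - avgR G.
Proof. by rewrite /avgR sumR_sub; rring. Qed.
Lemma avgR_scal c F : avgR (fun i => c * F i) = c * avgR F.
Proof. by rewrite /avgR sumR_scal; rring. Qed.
Lemma avgR_const c : avgR (fun _ : 'I_n => c) = c.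
Proof. rewrite /avgR sumR_const_ord; have := INRn_pos; move=> H; rfield; lra. Qed.
Lemma avgR_le F G : (forall i, F i <= G i) -> avgR F <= avgR G.
Proof.
move=> H; rewrite /avgR; apply: Rmult_le_compat_l.
  by have := INRn_pos => ?; apply: Rlt_le; apply: Rinv_0_lt_compat.
by apply: sumR_le.
Qed.
Lemma avgR_ge0 F : (forall i, 0 <= F i) -> 0 <= avgR F.
Proof. move=> H; have := avgR_le H; rewrite avgR_const; lra. Qed.

Lemma inner_avgV_l d (G : 'I_n -> vec d) y :
  inner (avgV G) y = avgR (fun i => inner (G i) y).
Proof.
rewrite /inner /avgV /avgR.
have -> : \big[Rplus/0]_(c < d) (/ INR n * \big[Rplus/0]_(i < n) G i c * y c) =
   \big[Rplus/0]_(c < d) (/ INR n * \big[Rplus/0]_(i < n) (G i c * y c)).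
  apply: eq_bigr => c _; rewrite Rmult_assoc; congr (_ * _).
  by rewrite Rmult_comm -sumR_scal; apply: eq_bigr => i _; ring.
by rewrite sumR_scal exchange_big.
Qed.

Lemma inner_avgV_r d (G : 'I_n -> vec d) y :
  inner y (avgV G) = avgR (fun i => inner y (G i)).
Proof.
rewrite inner_sym inner_avgV_l /avgR; congr (_ * _); apply: eq_bigr => i _.
by rewrite inner_sym.
Qed.

Lemma avgV_sub d (A B : 'I_n -> vec d) :
  avgV (fun i => vsub (A i) (B i)) = vsub (avgV A) (avgV B).
Proof. by apply: vext => c; rewrite /avgV /vsub sumR_sub; rring. Qed.

Lemma avgV_addc d (A : 'I_n -> vec d) (m : vec d) :
  avgV (fun i => vadd (A i) m) = vadd (avgV A) m.
Proof.
apply: vext => c; rewrite /avgV /vadd sumR_add sumR_const_ord.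
have := INRn_pos => ?; rfield; lra.
Qed.

Lemma variance d (A : 'I_n -> vec d) :
  avgR (fun i => norm2 (vsub (A i) (avgV A))) =
  avgR (fun i => norm2 (A i)) - norm2 (avgV A).
Proof.
have E : forall i, norm2 (vsub (A i) (avgV A)) =
   norm2 (A i) - 2 * inner (A i) (avgV A) + norm2 (avgV A).
  by move=> i; rewrite /norm2 !(inner_subl, inner_subr) (inner_sym (avgV A) (A i)); rring.
rewrite (avgR_ext E).
rewrite avgR_add avgR_sub avgR_scal avgR_const -inner_avgV_l /norm2; ring.
Qed.

Lemma variance_le d (A : 'I_n -> vec d) :
  avgR (fun i => norm2 (vsub (A i) (avgV A))) <= avgR (fun i => norm2 (A i)).
Proof. rewrite variance; have := norm2_ge0 (avgV A); lra. Qed.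

End Avg.

Lemma small_t (K b : R) : 0 <= K -> (forall t, 0 < t -> t <= 1 -> - (t * K) <= b) -> 0 <= b.
Proof.
move=> HK H.
case: (Rle_lt_dec 0 b) => Hb //.
set t := Rmin 1 (- b / (2 * (K + 1))).
have Ht1 : t <= 1 by apply: Rmin_l.
have Ht2 : t <= - b / (2 * (K + 1)) by apply: Rmin_r.
have Ht0 : 0 < t.
  apply: Rmin_pos; first lra. apply: Rdiv_lt_0_compat; lra.
have := H t Ht0 Ht1.
have E : - b / (2 * (K + 1)) * (K + 1) = - b / 2 by field; lra.
have : t * (K + 1) <= - b / 2 by rewrite -E; nra.
nra.
Qed.


Section F.
Variables (n d : nat) (L : R).
Hypothesis Hn : (0 < n)%nat.
Hypothesis HL : 0 < L.
Variables (fi : 'I_n -> vec d -> R) (gi : 'I_n -> vec d -> vec d).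
Hypothesis Hconv : forall i, convex_fun (fi i).
Hypothesis Hgrad : forall i, has_gradient (fi i) (gi i).
Hypothesis Hlip : forall i, lipschitz L (gi i).

Lemma favgB x y : avgR (fun i => fi i y) <= avgR (fun i => fi i x) +
   inner (avgV (fun i => gi i x)) (vsub y x) + L / 2 * norm2 (vsub y x).
Proof.
have H : avgR (fun i => fi i y) <= avgR (fun i => fi i x + inner (gi i x) (vsub y x)
   + L / 2 * norm2 (vsub y x)) by apply: (avgR_le Hn) => i; apply: gradB.
by rewrite !avgR_add (avgR_const Hn) -inner_avgV_l in H.
Qed.

Lemma favgC x y : avgR (fun i => fi i x) + inner (avgV (fun i => gi i x)) (vsub y x)
   + / (2 * L) * avgR (fun i => norm2 (vsub (gi i y) (gi i x))) <= avgR (fun i => fi i y).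
Proof.
have H : avgR (fun i => fi i x + inner (gi i x) (vsub y x)
   + / (2 * L) * norm2 (vsub (gi i y) (gi i x))) <= avgR (fun i => fi i y)
   by apply: (avgR_le Hn) => i; apply: gradC.
by rewrite !avgR_add avgR_scal -inner_avgV_l in H.
Qed.

Variables (dom : vec d -> Prop) (h : vec d -> R).
Hypothesis Hhconv : convex_ext dom h.

Lemma prox_vi prox gam y z : is_prox dom h prox -> 0 < gam -> dom z ->
  h (prox gam y) + / gam * inner (vsub y (prox gam y)) (vsub z (prox gam y)) <= h z.
Proof.
move=> Hp Hg Hz.
case: (Hp gam y Hg) => Hq Hmin.
set q := prox gam y in Hq Hmin *.
set u := vsub z q.
set b := h z - h q + / gam * inner (vsub q y) u.
suff : 0 <= b.
  have -> : / gam * inner (vsub y q) u = - (/ gam * inner (vsub q y) u).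
    by rewrite !inner_subl; ring.
  rewrite /b; lra.
apply: (@small_t (norm2 u / (2 * gam))).
  apply: Rle_mult_inv_pos; [apply: norm2_ge0|lra].
move=> t Ht0 Ht1.
case: (Hhconv Hz Hq (conj (Rlt_le _ _ Ht0) Ht1)) => Hzt Hhzt.
have Hm := Hmin _ Hzt.
set zt := vadd (vscale t z) (vscale (1 - t) q) in Hzt Hhzt Hm.
have E : vsub zt y = vadd (vsub q y) (vscale t u).
  by apply: vext => c; rewrite /zt /vsub /vadd /vscale /u /vsub; ring.
rewrite E in Hm.
have E2 : norm2 (vadd (vsub q y) (vscale t u)) =
   norm2 (vsub q y) + 2 * t * inner (vsub q y) u + t * t * norm2 u.
  rewrite /norm2 inner_addl (inner_addr (vsub q y) (vscale t u)) (inner_addr (vsub q y) (vscale t u)).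
  rewrite !inner_scalel !inner_scaler (inner_sym u (vsub q y)).
  ring.
rewrite E2 in Hm.
have Hg' : 0 < / gam by apply: Rinv_0_lt_compat.
have Hm' : 0 <= t * (h z - h q) + / (2 * gam) * (2 * t * inner (vsub q y) u + t * t * norm2 u).
  have E3 : forall a, a / (2 * gam) = / (2 * gam) * a by move=> a; rewrite /Rdiv Rmult_comm.
  rewrite !E3 in Hm.
  have : / (2 * gam) * (norm2 (vsub q y) + 2 * t * inner (vsub q y) u + t * t * norm2 u)
    = / (2 * gam) * norm2 (vsub q y) + / (2 * gam) * (2 * t * inner (vsub q y) u + t * t * norm2 u)
    by ring.
  lra.
have E4 : t * (h z - h q) + / (2 * gam) * (2 * t * inner (vsub q y) u + t * t * norm2 u)
   = t * (b + t * (norm2 u / (2 * gam))).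
  rewrite /b; field; lra.
rewrite E4 in Hm'.
have : 0 <= b + t * (norm2 u / (2 * gam)).
  apply: (Rmult_le_reg_l t); [lra | rewrite Rmult_0_r; exact Hm'].
lra.
Qed.

Lemma optimality xs : dom xs ->
  (forall y, dom y -> avgR (fun i => fi i xs) + h xs <= avgR (fun i => fi i y) + h y) ->
  forall z, dom z -> h xs - inner (avgV (fun i => gi i xs)) (vsub z xs) <= h z.
Proof.
move=> Hxs Hmin z Hz.
set u := vsub z xs.
set gs := avgV (fun i => gi i xs).
set b := h z - h xs + inner gs u.
suff : 0 <= b by rewrite /b; lra.
apply: (@small_t (L / 2 * norm2 u)).
  have := norm2_ge0 u; nra.
move=> t Ht0 Ht1.
case: (Hhconv Hz Hxs (conj (Rlt_le _ _ Ht0) Ht1)) => Hzt Hhzt.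
have Hm := Hmin _ Hzt.
have HB := favgB xs (vadd (vscale t z) (vscale (1 - t) xs)).
set zt := vadd (vscale t z) (vscale (1 - t) xs) in Hzt Hhzt Hm HB.
have E : vsub zt xs = vscale t u.
  by apply: vext => c; rewrite /zt /vsub /vadd /vscale /u /vsub; ring.
rewrite E inner_scaler norm2_scale -/gs in HB.
have : 0 <= t * (b + t * (L / 2 * norm2 u)).
  have -> : t * (b + t * (L / 2 * norm2 u)) =
    t * (h z - h xs) + (t * inner gs u + L / 2 * (t * t * norm2 u)) by rewrite /b; ring.
  lra.
move=> H.
have : 0 <= b + t * (L / 2 * norm2 u).
  apply: (Rmult_le_reg_l t); [lra | rewrite Rmult_0_r; exact H].
lra.
Qed.

End F.

Section J.
Variables (d : nat) (P : vec d -> Prop) (phi : vec d -> R).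
Hypothesis Hc : forall x y t, P x -> P y -> 0 <= t <= 1 ->
    P (vadd (vscale t x) (vscale (1 - t) y)) /\
    phi (vadd (vscale t x) (vscale (1 - t) y)) <= t * phi x + (1 - t) * phi y.

Lemma jensen (k : nat) (p : nat -> vec d) : (0 < k)%nat ->
  (forall t, (t < k)%nat -> P (p t)) ->
  P (fun c => / INR k * \big[Rplus/0]_(0 <= t < k) p t c) /\
  phi (fun c => / INR k * \big[Rplus/0]_(0 <= t < k) p t c) <=
    / INR k * \big[Rplus/0]_(0 <= t < k) phi (p t).
Proof.
case: k => [//|k] _.
elim: k => [|k IH] HP.
  have E : (fun c => / INR 1 * \big[Rplus/0]_(0 <= t < 1) p t c) = p 0%nat.
    by apply: vext => c; rewrite big_nat1 /=; field.
  rewrite E big_nat1 /=; split; first by apply: HP.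
  lra.
have HP' : forall t, (t < k.+1)%nat -> P (p t).
  by move=> t Ht; apply: HP; apply: ltnW.
case: (IH HP') => Ha Hphi.
set a := (fun c => / INR k.+1 * \big[Rplus/0]_(0 <= t < k.+1) p t c) in Ha Hphi.
have Hk : 0 < INR k.+1 by apply: lt_0_INR; lia.
set s := INR k.+1 / INR k.+2.
have Hs : 0 <= s <= 1.
  rewrite /s !S_INR; have := pos_INR k => ?; split.
    apply: Rle_mult_inv_pos; lra.
  apply: (Rmult_le_reg_r (INR k + 1 + 1)); first lra.
  rewrite /Rdiv Rmult_assoc Rinv_l; lra.
case: (Hc Ha (HP k.+1 (ltnSn _)) Hs) => HPn Hphin.
have E : (fun c => / INR k.+2 * \big[Rplus/0]_(0 <= t < k.+2) p t c) =
    vadd (vscale s a) (vscale (1 - s) (p k.+1)).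
  apply: vext => c; rewrite sumR_nat_recr // /vadd /vscale /a /s.
  genbig; rewrite !S_INR. field; have := pos_INR k; lra.
rewrite E; split => //.
rewrite sumR_nat_recr //.
apply: (Rle_trans _ _ _ Hphin).
have Hs0 : 0 <= s by lra.
have : s * phi a <= s * (/ INR k.+1 * \big[Rplus/0]_(0 <= t < k.+1) phi (p t)).
  by apply: Rmult_le_compat_l.
move=> H1.
have E2 : s * (/ INR k.+1 * \big[Rplus/0]_(0 <= t < k.+1) phi (p t)) +
   (1 - s) * phi (p k.+1) =
   / INR k.+2 * (\big[Rplus/0]_(0 <= t < k.+1) phi (p t) + phi (p k.+1)).
  rewrite /s; genbig; rewrite !S_INR; field; have := pos_INR k; lra.
lra.
Qed.
End J.


Lemma youngL d (a b : vec d) L : 0 < L -> inner a b <= / L / 4 * norm2 a + L * norm2 b.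
Proof.
move=> HL.
have H := norm2_ge0 (vsub a (vscale (2 * L) b)).
have E : norm2 (vsub a (vscale (2 * L) b)) = norm2 a - 4 * L * inner a b + 4 * (L * L) * norm2 b.
  vexp; ring.
rewrite E in H.
have H2 : 0 <= / L / 4 * (norm2 a - 4 * L * inner a b + 4 * (L * L) * norm2 b).
  apply: Rmult_le_pos => //; apply: Rlt_le; apply: Rmult_lt_0_compat; [apply: Rinv_0_lt_compat|]; lra.
have E2 : / L / 4 * (norm2 a - 4 * L * inner a b + 4 * (L * L) * norm2 b) =
   / L / 4 * norm2 a - inner a b + L * norm2 b by field; lra.
lra.
Qed.

Lemma young2 d (a b : vec d) : norm2 (vsub a b) <= 2 * norm2 a + 2 * norm2 b.
Proof.
have H := young (-1) a b.
have E : norm2 (vsub a b) = norm2 a - 2 * inner a b + norm2 b by vexp; ring.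
rewrite E; lra.
Qed.

Lemma young3 d (a b : vec d) : norm2 (vsub a b) <= 3 * norm2 a + 3 / 2 * norm2 b.
Proof.
have H := young (-2) a b.
have E : norm2 (vsub a b) = norm2 a - 2 * inner a b + norm2 b by vexp; ring.
rewrite E; lra.
Qed.

Section S.
Variables (n d : nat) (L : R).
Hypothesis Hn : (0 < n)%nat.
Hypothesis HL : 0 < L.
Variables (fi : 'I_n -> vec d -> R) (gi : 'I_n -> vec d -> vec d).
Hypothesis Hconv : forall i, convex_fun (fi i).
Hypothesis Hgrad : forall i, has_gradient (fi i) (gi i).
Hypothesis Hlip : forall i, lipschitz L (gi i).
Variables (dom : vec d -> Prop) (h : vec d -> R).
Hypothesis Hhconv : convex_ext dom h.
Variable prox : R -> vec d -> vec d.
Hypothesis Hprox : is_prox dom h prox.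
Variable xs : vec d.
Hypothesis Hxs_dom : dom xs.
Hypothesis Hxs_min : forall y, dom y ->
     avgR (fun i => fi i xs) + h xs <= avgR (fun i => fi i y) + h y.

Lemma gam_pos : 0 < / (3 * L).
Proof. apply: Rinv_0_lt_compat; lra. Qed.

Lemma step_fun x v :
  let gam := / (3 * L) in let p := prox gam (vsub x (vscale gam v)) in
  avgR (fun i => fi i p) + h p - (avgR (fun i => fi i xs) + h xs) <=
  3 * L / 2 * (norm2 (vsub x xs) - norm2 (vsub p xs))
  + / L / 4 * norm2 (vsub (avgV (fun i => gi i x)) v)
  + inner (vsub (avgV (fun i => gi i x)) v) (vsub x xs)
  - / L / 2 * avgR (fun i => norm2 (vsub (gi i xs) (gi i x))).
Proof.
move=> gam p.
have Hg : 0 < gam := gam_pos.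
have Hi := prox_vi Hhconv (vsub x (vscale gam v)) Hprox Hg Hxs_dom.
rewrite -/p in Hi.
have Hii := favgB Hn HL Hconv Hgrad Hlip x p.
have Hiii := favgC Hn HL Hconv Hgrad Hlip x xs.
set fpx := avgV (fun i => gi i x) in Hii Hiii *.
set G := avgR (fun i => norm2 (vsub (gi i xs) (gi i x))) in Hiii *.
clearbody fpx G.
have Hy := youngL (vsub fpx v) (vsub p x) HL.
have E0 : / (2 * L) * G = / L / 2 * G by field; lra.
rewrite E0 in Hiii.
have E1 : / gam * inner (vsub (vsub x (vscale gam v)) p) (vsub xs p) =
   3 * L * inner (vsub x p) (vsub xs p) - inner v (vsub xs p).
  rewrite !inner_subl inner_scalel /gam.
  have -> : / / (3 * L) = 3 * L by rewrite Rinv_inv.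
  field; lra.
have E2 : 3 * L * inner (vsub x p) (vsub xs p) =
   3 * L / 2 * (norm2 (vsub p x) + norm2 (vsub p xs) - norm2 (vsub x xs)).
  vexp; field.
have E3 : inner fpx (vsub p x) - inner fpx (vsub xs x) + inner v (vsub xs p) =
   inner (vsub fpx v) (vsub p x) + inner (vsub fpx v) (vsub x xs).
  vexp; ring.
rewrite E1 E2 in Hi.
lra.
Qed.

Lemma step_dist x v :
  let gam := / (3 * L) in let p := prox gam (vsub x (vscale gam v)) in
  norm2 (vsub p xs) <=
  norm2 (vsub (vsub x xs) (vscale gam (vsub v (avgV (fun i => gi i xs))))).
Proof.
move=> gam p.
have Hg : 0 < gam := gam_pos.
have Hi := prox_vi Hhconv (vsub x (vscale gam v)) Hprox Hg Hxs_dom.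
rewrite -/p in Hi.
have Hpd : dom p by case: (Hprox (vsub x (vscale gam v)) Hg).
have Ho := optimality Hn HL Hconv Hgrad Hlip Hhconv Hxs_dom Hxs_min Hpd.
set gs := avgV (fun i => gi i xs) in Ho *.
clearbody gs.
have H1 : / gam * inner (vsub (vsub x (vscale gam v)) p) (vsub xs p) <= inner gs (vsub p xs)
  by lra.
have H2 : gam * (/ gam * inner (vsub (vsub x (vscale gam v)) p) (vsub xs p))
   <= gam * inner gs (vsub p xs) by apply: Rmult_le_compat_l; lra.
have E : gam * (/ gam * inner (vsub (vsub x (vscale gam v)) p) (vsub xs p)) =
   inner (vsub (vsub x (vscale gam v)) p) (vsub xs p) by field; lra.
rewrite E in H2.
set a := vsub (vsub x xs) (vscale gam (vsub v gs)).
set u := vsub p xs.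
have E2 : inner (vsub (vsub x (vscale gam v)) p) (vsub xs p) - gam * inner gs (vsub p xs)
   = norm2 u - inner a u.
  rewrite /u /a; vexp; ring.
have Hy := young 1 a u.
lra.
Qed.

End S.


Lemma avgR_lin n (c0 c1 c2 c3 : R) (F1 F2 F3 F4 : 'I_n -> R) : (0 < n)%nat ->
  avgR (fun j => c0 + c1 * F1 j + c2 * F2 j + F3 j + c3 * F4 j) =
  c0 + c1 * avgR F1 + c2 * avgR F2 + avgR F3 + c3 * avgR F4.
Proof.
move=> Hn.
rewrite (avgR_add (fun j => c0 + c1 * F1 j + c2 * F2 j + F3 j)).
rewrite (avgR_add (fun j => c0 + c1 * F1 j + c2 * F2 j)).
rewrite (avgR_add (fun j => c0 + c1 * F1 j)).
rewrite (avgR_add (fun j => c0)).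
by rewrite !avgR_scal (avgR_const Hn).
Qed.

Lemma avgV_const n d (Hn : (0 < n)%nat) (a : vec d) : avgV (fun _ : 'I_n => a) = a.
Proof.
apply: vext => c; rewrite /avgV sumR_const_ord.
have := INRn_pos Hn => ?; rfield; lra.
Qed.

Section S.
Variables (n d : nat) (L : R).
Hypothesis Hn : (0 < n)%nat.
Hypothesis HL : 0 < L.
Variables (fi : 'I_n -> vec d -> R) (gi : 'I_n -> vec d -> vec d).
Hypothesis Hconv : forall i, convex_fun (fi i).
Hypothesis Hgrad : forall i, has_gradient (fi i) (gi i).
Hypothesis Hlip : forall i, lipschitz L (gi i).
Variables (dom : vec d -> Prop) (h : vec d -> R).
Hypothesis Hhconv : convex_ext dom h.
Variable prox : R -> vec d -> vec d.
Hypothesis Hprox : is_prox dom h prox.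
Variable xs : vec d.
Hypothesis Hxs_dom : dom xs.
Hypothesis Hxs_min : forall y, dom y ->
     avgR (fun i => fi i xs) + h xs <= avgR (fun i => fi i y) + h y.

Definition Dfun i y := fi i y - fi i xs - inner (gi i xs) (vsub y xs).
Definition Hf (phi : 'I_n -> vec d) := avgR (fun i => Dfun i (phi i)).
Definition Psi (s : saga_state n d) :=
  2 * INR n * Hf (sphi s) + 9 / 2 * L * norm2 (vsub (sx s) xs).
Definition Fv y := avgR (fun i => fi i y) + h y.

Lemma Dfun_ge0 i y : 0 <= Dfun i y.
Proof. have := gradA (Hconv i) (Hgrad i) xs y; rewrite /Dfun; lra. Qed.

Lemma Hf_ge0 phi : 0 <= Hf phi.
Proof. by apply: (avgR_ge0 Hn) => i; apply: Dfun_ge0. Qed.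

Lemma Psi_ge0 s : 0 <= Psi s.
Proof.
rewrite /Psi; have := Hf_ge0 (sphi s); have := norm2_ge0 (vsub (sx s) xs).
have := pos_INR n; nra.
Qed.

Lemma Hf_update (phi : 'I_n -> vec d) x j :
  Hf (fun i => if i == j then x else phi i) =
  Hf phi + / INR n * (Dfun j x - Dfun j (phi j)).
Proof.
rewrite /Hf /avgR.
rewrite (bigD1 j) //= (bigD1 j (P := xpredT)) //= eqxx.
have -> : \big[Rplus/0]_(i | true && (i != j)) Dfun i (if i == j then x else phi i)
   = \big[Rplus/0]_(i | true && (i != j)) Dfun i (phi i).
  apply: eq_bigr => i /= Hi; by rewrite (negbTE Hi).
rring.
Qed.


Lemma one_step (s : saga_state n d) :
  avgR (fun j => Fv (sx (saga_step gi prox (/ (3 * L)) s j)) - Fv xs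
                 + Psi (saga_step gi prox (/ (3 * L)) s j)) <= Psi s.
Proof.
case: s => x phi.
set gam := / (3 * L).
have Hg : 0 < gam := gam_pos HL.
set m := avgV (fun i => gi i (phi i)).
set fpx := avgV (fun i => gi i x).
set gs := avgV (fun i => gi i xs).
pose Y j := vsub (gi j x) (gi j (phi j)).
pose v j := vadd (Y j) m.
pose p j := prox gam (vsub x (vscale gam (v j))).
have Estep : forall j, saga_step gi prox gam (SagaState x phi) j =
    SagaState (p j) (fun i => if i == j then x else phi i).
  by move=> j; rewrite /saga_step /= eqxx.
set e := vsub x xs.
set r := norm2 e.
set G := avgR (fun i => norm2 (vsub (gi i xs) (gi i x))).
set Gphi := avgR (fun i => norm2 (vsub (gi i (phi i)) (gi i xs))).
set H := Hf phi.
set Dx := avgR (fun i => Dfun i x).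
pose N j := norm2 (vsub fpx (v j)).
pose I j := inner (vsub fpx (v j)) e.
pose Rr j := norm2 (vsub (p j) xs).
pose H' j := Hf (fun i => if i == j then x else phi i).
have Hj : forall j, Fv (sx (saga_step gi prox gam (SagaState x phi) j)) - Fv xs
      + Psi (saga_step gi prox gam (SagaState x phi) j) <=
    (3 * L / 2 * r - / L / 2 * G) + 3 * L * Rr j + / L / 4 * N j + I j + 2 * INR n * H' j.
  move=> j; rewrite Estep /Psi /Fv /=.
  have := step_fun Hn HL Hconv Hgrad Hlip Hhconv Hprox Hxs_dom x (v j).
  move=> HH; cbv zeta in HH.
  rewrite -/(p j) -/(Rr j) -/fpx -/e -/r -/G -/(N j) -/(I j) in HH.
  rewrite -/(Rr j) -/(H' j).
  lra.
have Havg := avgR_le Hn Hj.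
rewrite avgR_lin // in Havg.
set K := avgR Rr in Havg.
have EY : avgV Y = vsub fpx m by rewrite /Y avgV_sub.
have F1 : avgR N <= 2 * G + 2 * Gphi.
  have : avgR N <= avgR (fun j => norm2 (Y j)).
    have -> : avgR N = avgR (fun j => norm2 (vsub (Y j) (avgV Y))).
      apply: avgR_ext => j; rewrite /N norm2_vsubC EY; congr norm2.
      by apply: vext => c; rewrite /vsub /v /vadd; ring.
    exact: variance_le.
  have : avgR (fun j => norm2 (Y j)) <=
     avgR (fun j => 2 * norm2 (vsub (gi j xs) (gi j x)) + 2 * norm2 (vsub (gi j (phi j)) (gi j xs))).
    apply: (avgR_le Hn) => j.
    have -> : Y j = vsub (vsub (gi j x) (gi j xs)) (vsub (gi j (phi j)) (gi j xs)).
      by apply: vext => c; rewrite /Y /vsub; ring.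
    rewrite (norm2_vsubC (gi j xs)); exact: young2.
  rewrite avgR_add !avgR_scal -/G -/Gphi.
  lra.
have Ev : avgV v = fpx.
  rewrite /v avgV_addc // EY; apply: vext => c; rewrite /vadd /vsub; ring.
have F2 : avgR I = 0.
  have -> : avgR I = avgR (fun j => inner fpx e - inner (v j) e).
    by apply: avgR_ext => j; rewrite /I inner_subl.
  rewrite avgR_sub (avgR_const Hn) -inner_avgV_l Ev; ring.
have F3 : 2 * INR n * avgR H' = 2 * INR n * H + 2 * Dx - 2 * H.
  have -> : avgR H' = avgR (fun j => H + / INR n * (Dfun j x - Dfun j (phi j))).
    by apply: avgR_ext => j; rewrite /H' Hf_update.
  rewrite avgR_add (avgR_const Hn) avgR_scal avgR_sub -/Dx -/(Hf phi) -/H.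
  have := INRn_pos Hn => ?; field; lra.
have F5 : / L / 2 * Gphi <= H.
  rewrite /Gphi -avgR_scal; apply: (avgR_le Hn) => i.
  have := gradC HL (Hconv i) (Hgrad i) (Hlip i) xs (phi i).
  have -> : / (2 * L) = / L / 2 by field; lra.
  rewrite /Dfun; lra.
have F6 := favgC Hn HL Hconv Hgrad Hlip x xs.
rewrite -/fpx -/G in F6.
have E6 : / (2 * L) * G = / L / 2 * G by field; lra.
rewrite E6 in F6.
have EDx : Dx = avgR (fun i => fi i x) - avgR (fun i => fi i xs) - inner gs e.
  by rewrite /Dx /Dfun !avgR_sub inner_avgV_l.
pose c j := vsub (v j) gs.
have Ec : avgV c = vsub fpx gs.
  by rewrite /c avgV_sub Ev avgV_const.
have Hdist : forall j, Rr j <= r - 2 * gam * inner e (c j) + gam * gam * norm2 (c j).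
  move=> j.
  have := step_dist Hn HL Hconv Hgrad Hlip Hhconv Hprox Hxs_dom Hxs_min x (v j).
  move=> HH; cbv zeta in HH.
  rewrite -/(p j) -/(Rr j) -/gs -/e -/(c j) in HH.
  have E : forall cj, norm2 (vsub e (vscale gam cj)) = r - 2 * gam * inner e cj + gam * gam * norm2 cj.
    move=> cj; rewrite /r; clearbody e; vexp; ring.
  rewrite E in HH.
  lra.
have HK := avgR_le Hn Hdist.
rewrite (avgR_add (fun j => r - 2 * gam * inner e (c j))) avgR_sub (avgR_const Hn) !avgR_scal
   -inner_avgV_r Ec -/K in HK.
have Fc : avgR (fun j => norm2 (c j)) <= 3 * G + 3 / 2 * Gphi.
  pose Z j := vsub (gi j (phi j)) (gi j xs).
  have EZ : avgV Z = vsub m gs by rewrite /Z avgV_sub.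
  have : avgR (fun j => norm2 (c j)) <=
     avgR (fun j => 3 * norm2 (vsub (gi j xs) (gi j x)) + 3 / 2 * norm2 (vsub (Z j) (avgV Z))).
    apply: (avgR_le Hn) => j.
    have -> : c j = vsub (vsub (gi j x) (gi j xs)) (vsub (Z j) (avgV Z)).
      rewrite EZ; apply: vext => k; rewrite /c /v /Y /Z /vsub /vadd; ring.
    rewrite (norm2_vsubC (gi j xs)); exact: young3.
  rewrite avgR_add !avgR_scal -/G.
  have := variance_le Hn Z.
  rewrite -/Gphi.
  lra.
have Einn : inner e (vsub fpx gs) = Dx + (avgR (fun i => fi i xs) - avgR (fun i => fi i x)
     - inner fpx (vsub xs x)).
  rewrite EDx /e; clearbody fpx gs; vexp; ring.
have HK2 : 9 / 2 * L * K <= 9 / 2 * L * r - 3 * Dx + 3 / 2 * H.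
  have H1 : 9 / 2 * L * K <= 9 / 2 * L * (r - 2 * gam * inner e (vsub fpx gs) +
       gam * gam * avgR (fun j => norm2 (c j))).
    apply: Rmult_le_compat_l; lra.
  have E1 : 9 / 2 * L * (r - 2 * gam * inner e (vsub fpx gs) +
       gam * gam * avgR (fun j => norm2 (c j))) =
     9 / 2 * L * r - 3 * inner e (vsub fpx gs) + / L / 2 * avgR (fun j => norm2 (c j)).
    rewrite /gam; field; lra.
  have H2 : / L / 2 * avgR (fun j => norm2 (c j)) <= / L / 2 * (3 * G + 3 / 2 * Gphi).
    apply: Rmult_le_compat_l => //; apply: Rlt_le; apply: Rmult_lt_0_compat;
      [apply: Rinv_0_lt_compat|]; lra.
  rewrite E1 in H1; rewrite Einn in H1.
  lra.
have HN2 : / L / 4 * avgR N <= / L / 4 * (2 * G + 2 * Gphi).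
  apply: Rmult_le_compat_l => //; apply: Rlt_le; apply: Rmult_lt_0_compat;
    [apply: Rinv_0_lt_compat|]; lra.
rewrite F2 in Havg.
have EP : Psi (SagaState x phi) = 2 * INR n * H + 9 / 2 * L * r by [].
rewrite EP.
lra.
Qed.

End S.


Section E.
Variable n : nat.
Hypothesis Hn : (0 < n)%nat.

Lemma expect0 (X : seq 'I_n -> R) : expect_idx 0 X = X [::].
Proof.
rewrite /expect_idx /=.
rewrite (eq_bigl (fun t : 0.-tuple 'I_n => t == [tuple])); last first.
  by move=> t; rewrite tuple0 eqxx.
rewrite big_pred1_eq /=; field.
Qed.

Lemma expectS k (X : seq 'I_n -> R) :
  expect_idx k.+1 X = avgR (fun j => expect_idx k (fun s => X (j :: s))).
Proof.
rewrite /expect_idx /avgR.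
rewrite (reindex (fun p : 'I_n * k.-tuple 'I_n => [tuple of p.1 :: p.2])) /=; last first.
  apply: onW_bij.
  exists (fun t : k.+1.-tuple 'I_n => (thead t, [tuple of behead t])).
    move=> [j t] /=; congr pair.
    by apply: val_inj.
  by move=> t /=; rewrite [RHS]tuple_eta; apply: val_inj.
rewrite -(pair_bigA _ (fun (j : 'I_n) (t : k.-tuple 'I_n) => X (j :: t))) /=.
have HnR : INR n <> 0 by have := INRn_pos Hn; lra.
have Hpk : INR n ^ k <> 0 by apply: pow_nonzero.
rewrite -sumR_scal.
have -> : / (INR n * INR n ^ k) = / INR n * / INR n ^ k by field.
rewrite -sumR_scal; apply: eq_bigr => i _; rring.
Qed.

Lemma expect_le k (X Y : seq 'I_n -> R) :
  (forall t : k.-tuple 'I_n, X t <= Y t) -> expect_idx k X <= expect_idx k Y.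
Proof.
move=> H; rewrite /expect_idx; apply: Rmult_le_compat_l.
  apply: Rlt_le; apply: Rinv_0_lt_compat; apply: pow_lt; exact: INRn_pos.
by apply: sumR_le => t _.
Qed.

Lemma expect_addc k c (X : seq 'I_n -> R) :
  expect_idx k (fun s => c + X s) = c + expect_idx k X.
Proof.
elim: k c X => [|k IH] c X; first by rewrite !expect0.
rewrite !expectS.
rewrite (avgR_ext (G := fun j => c + expect_idx k (fun s => X (j :: s)))); last by move=> j; apply: IH.
by rewrite avgR_add (avgR_const Hn).
Qed.

Lemma expect_scal k c (X : seq 'I_n -> R) :
  expect_idx k (fun s => c * X s) = c * expect_idx k X.
Proof. by rewrite /expect_idx sumR_scal; rring. Qed.

End E.


Section M.
Variables (n d : nat) (L : R).
Hypothesis Hn : (0 < n)%nat.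
Hypothesis HL : 0 < L.
Variables (fi : 'I_n -> vec d -> R) (gi : 'I_n -> vec d -> vec d).
Hypothesis Hconv : forall i, convex_fun (fi i).
Hypothesis Hgrad : forall i, has_gradient (fi i) (gi i).
Hypothesis Hlip : forall i, lipschitz L (gi i).
Variables (dom : vec d -> Prop) (h : vec d -> R).
Hypothesis Hhconv : convex_ext dom h.
Variable prox : R -> vec d -> vec d.
Hypothesis Hprox : is_prox dom h prox.
Variable xs : vec d.
Hypothesis Hxs_dom : dom xs.
Hypothesis Hxs_min : forall y, dom y ->
     avgR (fun i => fi i xs) + h xs <= avgR (fun i => fi i y) + h y.

Definition run (s : saga_state n d) (js : seq 'I_n) :=
  foldl (saga_step gi prox (/ (3 * L))) s js.

Lemma induct k : forall s,
  expect_idx k (fun js => \big[Rplus/0]_(0 <= t < k)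
      (Fv fi h (sx (run s (take t.+1 js))) - Fv fi h xs) + Psi L fi gi xs (run s js))
  <= Psi L fi gi xs s.
Proof.
elim: k => [|k IH] s.
  rewrite expect0 big_geq //= /run /=; lra.
rewrite expectS //.
apply: Rle_trans (one_step Hn HL Hconv Hgrad Hlip Hhconv Hprox Hxs_dom Hxs_min s).
apply: (avgR_le Hn) => j.
set s1 := saga_step gi prox (/ (3 * L)) s j.
have E : (fun js => \big[Rplus/0]_(0 <= t < k.+1)
      (Fv fi h (sx (run s (take t.+1 (j :: js)))) - Fv fi h xs) + Psi L fi gi xs (run s (j :: js)))
  = (fun js => (Fv fi h (sx s1) - Fv fi h xs) + (\big[Rplus/0]_(0 <= t < k)
      (Fv fi h (sx (run s1 (take t.+1 js))) - Fv fi h xs) + Psi L fi gi xs (run s1 js))).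
  apply: functional_extensionality => js.
  rewrite sumR_nat_recl //.
  have -> : run s (take 1 (j :: js)) = s1 by rewrite /= take0.
  have -> : \big[Rplus/0]_(0 <= t < k)
      (Fv fi h (sx (run s (take t.+2 (j :: js)))) - Fv fi h xs) =
      \big[Rplus/0]_(0 <= t < k) (Fv fi h (sx (run s1 (take t.+1 js))) - Fv fi h xs)
    by apply: eq_bigr.
  have -> : run s (j :: js) = run s1 js by [].
  rring.
rewrite E expect_addc //.
have := IH s1; lra.
Qed.

Lemma run_dom s (l : seq 'I_n) : l <> [::] -> dom (sx (run s l)).
Proof.
elim: l s => [//|j l IH] s _.
case: l IH => [|j' l] IH.
  rewrite /run /=; exact: (fun y => proj1 (Hprox y (gam_pos HL))).
rewrite /run /=; apply: IH => //.
Qed.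

End M.


Lemma sumR_const_nat k c : \big[Rplus/0]_(0 <= t < k) c = INR k * c.
Proof. by rewrite big_mkord sumR_const_ord. Qed.

Lemma take_nonnil (T : Type) (t' : nat) (s : seq T) : (t' < size s)%nat -> take t'.+1 s <> [::].
Proof. by case: s => [//|x s] /=. Qed.

Unset Implicit Arguments.
Theorem theorem2
  (n d : nat) (Hn : (0 < n)%nat) (L : R) (HL : 0 < L)
  (fi : 'I_n -> vec d -> R) (gi : 'I_n -> vec d -> vec d)
  (Hconv : forall i, convex_fun (fi i))
  (Hgrad : forall i, has_gradient (fi i) (gi i))
  (Hlip : forall i, lipschitz L (gi i))
  (dom : vec d -> Prop) (h : vec d -> R)
  (Hproper : proper_ext dom) (Hclosed : closed_ext dom h) (Hhconv : convex_ext dom h)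
  (prox : R -> vec d -> vec d) (Hprox : is_prox dom h prox)
  (xstar : vec d) (Hxs_dom : dom xstar)
  (Hxs_min : forall y, dom y ->
     avgR (fun i => fi i xstar) + h xstar <= avgR (fun i => fi i y) + h y)
  (x0 : vec d) (k : nat) (Hk : (1 <= k)%nat) :
  let f := fun x => avgR (fun i => fi i x) in
  let f' := fun x => avgV (fun i => gi i x) in
  let F := fun x => f x + h x in
  let gam := / (3 * L) in
  expect_idx k (fun js => F (saga_avg gi prox gam x0 k js)) - F xstar
  <= 4 * INR n / INR k *
     (2 * L / INR n * norm2 (vsub x0 xstar) + f x0
      - inner (f' xstar) (vsub x0 xstar) - f xstar).
Proof.
move=> f f' F gam.
have HkR : 0 < INR k by apply: lt_0_INR; apply/ltP.
have HnR : 0 < INR n := INRn_pos Hn.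
set s0 : saga_state n d := saga_init x0.
pose Ps := Psi L fi gi xstar.
pose X := fun js => \big[Rplus/0]_(0 <= t < k)
      (Fv fi h (sx (run L gi prox s0 (take t.+1 js))) - Fv fi h xstar) + Ps (run L gi prox s0 js).
have Hpt : forall t : k.-tuple 'I_n,
    - F xstar + F (saga_avg gi prox gam x0 k t) <= / INR k * X t.
  move=> t.
  pose p t' := sx (run L gi prox s0 (take t'.+1 t)).
  have Eavg : saga_avg gi prox gam x0 k t = (fun c => / INR k * \big[Rplus/0]_(0 <= t' < k) p t' c).
    apply: vext => c; rewrite /saga_avg big_add1 /=.
    by [].
  have Hdomp : forall t', (t' < k)%nat -> dom (p t').
    move=> t' Ht'; apply: (run_dom HL gi Hprox); apply: take_nonnil.
    by rewrite size_tuple.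
  have Jh := jensen Hhconv (p := p) Hk Hdomp.
  have Jf : forall i, fi i (fun c => / INR k * \big[Rplus/0]_(0 <= t' < k) p t' c) <=
       / INR k * \big[Rplus/0]_(0 <= t' < k) fi i (p t').
    move=> i.
    have Hc : forall x y tt, True -> True -> 0 <= tt <= 1 ->
        True /\ fi i (vadd (vscale tt x) (vscale (1 - tt) y)) <= tt * fi i x + (1 - tt) * fi i y.
      by move=> x y tt _ _ Htt; split => //; apply: Hconv.
    by case: (jensen Hc (p := p) Hk (fun _ _ => I)).
  case: Jh => _ Jh.
  rewrite Eavg /F /f.
  set a := (fun c => / INR k * \big[Rplus/0]_(0 <= t' < k) p t' c) in Jh Jf *.
  have Hf1 : avgR (fun i => fi i a) <=
      / INR k * \big[Rplus/0]_(0 <= t' < k) avgR (fun i => fi i (p t')).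
    have := avgR_le Hn Jf.
    rewrite avgR_scal.
    have -> : avgR (fun i => \big[Rplus/0]_(0 <= t' < k) fi i (p t')) =
        \big[Rplus/0]_(0 <= t' < k) avgR (fun i => fi i (p t')).
      by rewrite /avgR exchange_big -sumR_scal.
    done.
  have HX : / INR k * \big[Rplus/0]_(0 <= t' < k) avgR (fun i => fi i (p t')) +
      / INR k * \big[Rplus/0]_(0 <= t' < k) h (p t') - F xstar =
      / INR k * \big[Rplus/0]_(0 <= t' < k) (Fv fi h (p t') - Fv fi h xstar).
    rewrite sumR_sub sumR_const_nat /Fv sumR_add /F /f; rfield; lra.
  have HPs : 0 <= Ps (run L gi prox s0 t) by apply: (Psi_ge0 Hn HL Hconv Hgrad).
  have : / INR k * Ps (run L gi prox s0 t) >= 0.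
    apply: Rle_ge; apply: Rmult_le_pos => //; apply: Rlt_le; apply: Rinv_0_lt_compat; lra.
  rewrite /X Rmult_plus_distr_l -/(p _).
  have -> : \big[Rplus/0]_(0 <= t0 < k)
      (Fv fi h (sx (run L gi prox s0 (take t0.+1 t))) - Fv fi h xstar) =
      \big[Rplus/0]_(0 <= t' < k) (Fv fi h (p t') - Fv fi h xstar) by [].
  rewrite /F /f in HX; genbig_all; lra.
have H1 := @expect_le n Hn k (fun js => - F xstar + F (saga_avg gi prox gam x0 k js)) (fun js => / INR k * X js) Hpt.
rewrite expect_addc // expect_scal in H1.
have H2 := induct Hn HL Hconv Hgrad Hlip Hhconv Hprox Hxs_dom Hxs_min k s0.
rewrite -/X in H2.
have H3 : / INR k * expect_idx k X <= / INR k * Ps s0.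
  apply: Rmult_le_compat_l => //; apply: Rlt_le; apply: Rinv_0_lt_compat; lra.
have EPs : Ps s0 = 2 * INR n * (f x0 - f xstar - inner (f' xstar) (vsub x0 xstar))
     + 9 / 2 * L * norm2 (vsub x0 xstar).
  rewrite /Ps /Psi /Hf /=; congr (_ * _ + _).
  by rewrite /Dfun !avgR_sub inner_avgV_l.
have HH0 : 0 <= f x0 - f xstar - inner (f' xstar) (vsub x0 xstar).
  have := Hf_ge0 Hn Hconv Hgrad xstar (fun _ => x0).
  by rewrite /Hf /Dfun !avgR_sub -inner_avgV_l.
set H0 := f x0 - f xstar - inner (f' xstar) (vsub x0 xstar) in EPs HH0.
have Hr0 := norm2_ge0 (vsub x0 xstar).
have ER : 4 * INR n / INR k * (2 * L / INR n * norm2 (vsub x0 xstar) + f x0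
      - inner (f' xstar) (vsub x0 xstar) - f xstar) =
      / INR k * (8 * L * norm2 (vsub x0 xstar) + 4 * INR n * H0).
  rewrite /H0; field; lra.
rewrite ER.
have H4 : / INR k * Ps s0 <= / INR k * (8 * L * norm2 (vsub x0 xstar) + 4 * INR n * H0).
  apply: Rmult_le_compat_l; first by apply: Rlt_le; apply: Rinv_0_lt_compat; lra.
  rewrite EPs; nra.
lra.
Qed.
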